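(* Let $a,d$ be real numbers and let $A_{n,k}(a,d)$ be the general Eulerian numbers defined below. Then for all integers $n\ge 1$ and $m\ge 1$, $$\sum_{i=1}^m (a+(i-1)d)^n=\sum_{j=-1}^{n-1}A_{n,j}(a,d)\binom{m+j+1}{n+1}.$$
   Context: For real numbers $a,d$, the general Eulerian numbers $A_{n,k}(a,d)$ (integers $n\ge 0$, $k$) are defined by $A_{0,-1}(a,d)=1$, $A_{n,k}(a,d)=0$ whenever $k\ge n$ or $k\le -2$ (in particular $A_{0,k}=0$ for $k\neq -1$), and for $n\ge 1$, $-1\le k\le n-1$: $$A_{n,k}(a,d)=(-a+(k+2)d)A_{n-1,k}(a,d)+(a+(n-k-1)d)A_{n-1,k-1}(a,d).$$ For a nonnegative integer $x$ and $n\ge 0$, $\binom{x}{n}=x(x-1)\cdots(x-n+1)/n!$ (so it is $0$ when $x<n$). *)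

(* Defs.v *)
From mathcomp Require Import all_boot all_order all_algebra.
From mathcomp Require Import reals.
Set Implicit Arguments. Unset Strict Implicit. Unset Printing Implicit Defensive.
Import Order.TTheory GRing.Theory Num.Theory.
Local Open Scope ring_scope.

Fixpoint genEuler (R : nzRingType) (a d : R) (n : nat) (k : int) : R :=
  match n with
  | 0%N => if k == (-1)%R then 1 else 0
  | n'.+1 =>
      if ((-1)%R <= k) && (k <= (n'%:Z)%R) then
        (- a + (k + 2)%:~R * d) * genEuler a d n' k
        + (a + ((n'.+1)%:Z - k - 1)%:~R * d) * genEuler a d n' (k - 1)
      else 0
  end.

(* Main.v *)
Require Import Defs.
From mathcomp Require Import all_boot all_order all_algebra.
From mathcomp Require Import reals.
From mathcomp Require Import zify ring.
Import Order.TTheory GRing.Theory Num.Theory.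
Local Open Scope ring_scope.

Section S.
Variables (R : realType) (a d : R).

Lemma gE_m2 n : genEuler a d n (-2) = 0.
Proof. by case: n. Qed.

Lemma gE_big n j : (n < j)%N -> genEuler a d n (j%:Z - 1) = 0.
Proof.
case: n => [|n] /= hj.
  have -> : (j%:Z - 1 == -1) = false by apply/negbTE; apply/eqP; lia.
  by [].
have -> : ((-1 <= j%:Z - 1) && (j%:Z - 1 <= n%:Z)) = false.
  apply/negbTE; apply/negP => /andP [_ h]; lia.
by [].
Qed.

Lemma gE_rec n j : (j <= n.+1)%N ->
  genEuler a d n.+1 (j%:Z - 1) =
  (- a + j.+1%:R * d) * genEuler a d n (j%:Z - 1)
  + (a + (n.+1%:Z - j%:Z)%:~R * d) * genEuler a d n (j%:Z - 1 - 1).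
Proof.
move=> hj /=.
have -> : ((-1 <= j%:Z - 1) && (j%:Z - 1 <= n%:Z)) = true.
  apply/andP; split; lia.
have -> : (j%:Z - 1 + 2) = j.+1%:Z by lia.
have -> : (n.+1%:Z - (j%:Z - 1) - 1) = (n.+1%:Z - j%:Z) by lia.
by [].
Qed.

Lemma key (y j n : nat) :
  (a + y%:R * d) * ('C(y + j, n))%:R =
  (- a + j.+1%:R * d) * ('C(y + j, n.+1))%:R
  + (a + (n%:Z - j%:Z)%:~R * d) * ('C((y + j).+1, n.+1))%:R.
Proof.
rewrite binS natrD.
have h : (n.+1%:R * ('C(y + j, n.+1))%:R : R) = ((y + j)%:R - n%:R) * ('C(y + j, n))%:R.
  rewrite -natrM mul_bin_left.
  case: (leqP n (y + j)) => hn; first by rewrite natrM natrB.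
  by rewrite bin_small // muln0 mulr0.
have hz : ((n%:Z - j%:Z)%:~R : R) = n%:R - j%:R by rewrite intrB.
rewrite hz.
move: h; set C0 := ('C(y + j, n))%:R; set C1 := ('C(y + j, n.+1))%:R => h.
apply/eqP; rewrite -subr_eq0; apply/eqP.
transitivity (d * (((y + j)%:R - n%:R) * C0 - n.+1%:R * C1)).
  rewrite -!natr1 !natrD; ring.
by rewrite h subrr mulr0.
Qed.

Lemma pointwise (y n : nat) :
  (a + y%:R * d) ^+ n =
  \sum_(0 <= j < n.+1) genEuler a d n (j%:Z - 1) * ('C(y + j, n))%:R.
Proof.
elim: n => [|n IH].
  by rewrite big_nat1 /= expr0 addn0 bin0 mulr1.
rewrite exprS IH big_distrr /=.
rewrite [RHS](eq_big_nat _ _ (F2 := fun j =>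
   (- a + j.+1%:R * d) * genEuler a d n (j%:Z - 1) * ('C(y + j, n.+1))%:R
 + (a + (n.+1%:Z - j%:Z)%:~R * d) * genEuler a d n (j%:Z - 1 - 1) * ('C(y + j, n.+1))%:R)); last first.
  move=> j /andP [_ hj]; move: (@gE_rec n j hj) => /= ->; ring.
rewrite big_split /=.
rewrite (big_nat_recr (n.+1)) //= (@gE_big n n.+1) // mulr0 mul0r addr0.
rewrite (big_nat_recl (n.+1)) //= gE_m2 mulr0 mul0r add0r.
rewrite -big_split /=; apply: eq_bigr => j _.
rewrite mulrCA key mulrDr; congr (_ + _); first ring.
have -> : (j.+1%:Z - 1 - 1) = j%:Z - 1 by lia.
have -> : (n.+1%:Z - j.+1%:Z) = n%:Z - j%:Z by lia.
rewrite addnS; ring.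
Qed.

End S.

Theorem lemma2p4 (R : realType) (a d : R) (n m : nat) :
  (1 <= n)%N -> (1 <= m)%N ->
  \sum_(1 <= i < m.+1) (a + (i.-1)%:R * d) ^+ n
  = \sum_(0 <= j < n.+1)
      genEuler a d n (j%:Z - 1) * ('C(m + j, n.+1))%:R.
Proof.
move=> _ _; elim: m => [|m IH].
  rewrite big_geq // big1_seq // => j; rewrite mem_iota => /andP [_ hj].
  by rewrite add0n bin_small ?mulr0.
rewrite big_nat_recr //= IH pointwise -big_split /=.
apply: eq_bigr => j _; by rewrite addSn binS natrD mulrDr.
Qed.
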